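(* The action of $\mathfrak{gl}(\mathring{\mathfrak g})[t,t^{-1}]\rtimes\mathbb C\mathsf D$ on $\overline{\mathrm{Der}}\,\mathcal O$ given by $x\cdot v=[\iota(x),v]$ stabilizes the Lie subalgebra $\mathrm{Der}_w\mathcal O$.
   Context: $\mathring{\mathfrak g}$ is a finite-dimensional simple complex Lie algebra with basis $\{J_a\}_{a\in\mathcal I}$ ($\mathcal I$ finite). $\mathcal O=\mathbb C[X^{a,n}]_{(a,n)\in\mathcal I\times\mathbb Z}$, $D_{a,n}=\partial/\partial X^{a,n}$, $\overline{\mathrm{Der}}\,\mathcal O$ is the Lie algebra of possibly infinite formal sums $\sum_{(a,n)}P^{a,n}(X)D_{a,n}$ (bracket as commutator of derivations; each coefficient a finite sum). A collection $\{P^{a,n}\}$ has widening gap if for every $K\ge1$, $P^{a,n}\in\mathbb C[X^{b,m}:|m|<|n|-K]$ for all $a$, for all but finitely many $n\in\mathbb Z$; $\mathrm{Der}_w\mathcal O$ is the Lie subalgebra of sums with widening-gap coefficients. The loop algebra $\mathfrak{gl}(\mathring{\mathfrak g})[t,t^{-1}]$ has basis $S^a_{b,n}$ ($a,b\in\mathcal I$, $n\in\mathbb Z$) with $[S^a_{b,n},S^c_{d,m}]=\delta^c_bS^a_{d,n+m}-\delta^a_dS^c_{b,n+m}$, and $\mathsf D$ is the derivation with $[\mathsf D,S^a_{b,n}]=nS^a_{b,n}$. The embedding $\iota:\mathfrak{gl}(\mathring{\mathfrak g})[t,t^{-1}]\rtimes\mathbb C\mathsf D\hookrightarrow\overline{\mathrm{Der}}\,\mathcal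 O$ is $\iota(S^b_{c,n})=\sum_{m\in\mathbb Z}X^{b,m-n}D_{c,m}$, $\iota(\mathsf D)=\sum_{a\in\mathcal I,m\in\mathbb Z}mX^{a,m}D_{a,m}$. *)

(* Defs.v *)
From HB Require Import structures.
From mathcomp Require Import all_boot all_order all_algebra.
From mathcomp Require Import finmap.
From mathcomp Require Import reals.
From mathcomp Require Import complex.
From mathcomp Require Import monalg.

Set Implicit Arguments.
Unset Strict Implicit.
Unset Printing Implicit Defensive.

Import Order.TTheory GRing.Theory Num.Theory.
Local Open Scope ring_scope.

Section Defs.
Variables (R : realType) (I : finType).

Definition CC : Type := R[i].

(* Index set of the variables X^{a,n}, (a,n) in I x Z. *)
Definition Var : choiceType := (I * int)%type.

(* O = C[X^{a,n}] : commutative polynomials in the variables Var. *)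
Definition O := {malg CC[cmonom Var]}.

Definition Xv (v : Var) : O := << ucm v >>.

(* The partial derivative D_v = d/dX^v on O. *)
Definition deriv (v : Var) (p : O) : O :=
  \sum_(m <- msupp p) << (p@_m * (cmonom_val m v)%:R)
                          *g divcm m (ucm v) >>.

Definition vars (p : O) : seq Var :=
  undup (flatten [seq (finsupp (cmonom_val m) : seq Var)
                 | m <- (msupp p : seq (cmonom Var))]).

(* Elements of \overline{Der} O : formal sums  sum_v P^v D_v, i.e. the
   family of coefficients v |-> P^v. *)
Definition Derbar := Var -> O.

(* Commutator bracket of derivations:
   [P, Q]^w = sum_v (P^v D_v Q^w - Q^v D_v P^w); only the finitely many
   variables occurring in Q^w (resp. P^w) contribute. *)
Definition bracket (P Q : Derbar) : Derbar := fun w =>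
  \sum_(v <- vars (Q w)) P v * deriv v (Q w)
  - \sum_(v <- vars (P w)) Q v * deriv v (P w).

(* p lies in C[X^{b,m} : S m], the subring generated by the variables
   whose integer index satisfies S. *)
Definition poly_in (S : int -> Prop) (p : O) : Prop :=
  forall m, m \in msupp p ->
  forall v : Var, v \in finsupp (cmonom_val m) -> S v.2.

Definition widening_gap (P : Derbar) : Prop :=
  forall K : nat, (1 <= K)%N ->
  exists s : seq int, forall n : int, n \notin s ->
  forall a : I, poly_in (fun m => `|m| < `|n| - (K%:Z)) (P (a, n)).

(* The Lie algebra gl(g)[t,t^-1] >< C D as a vector space: an element is
   sum_{(b,c,n)} f_{b,c,n} S^b_{c,n} + mu D, with f finitely supported. *)
Definition loopD := ({malg CC[(I * I * int)%type]} * CC)%type.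

(* The embedding iota, extended linearly:
   iota(S^b_{c,n}) = sum_m X^{b,m-n} D_{c,m},
   iota(D) = sum_{a,m} m X^{a,m} D_{a,m}. *)
Definition iota_emb (x : loopD) : Derbar := fun w =>
  \sum_(k <- (msupp x.1 : seq _) | k.1.2 == w.1)
      (x.1)@_k *: Xv (k.1.1, w.2 - k.2)
  + (x.2 * (w.2)%:~R) *: Xv w.

End Defs.

(* Main.v *)
Require Import Defs.
From HB Require Import structures.
From mathcomp Require Import all_boot all_order all_algebra.
From mathcomp Require Import finmap reals complex monalg.
From mathcomp Require Import zify.
Import Order.TTheory GRing.Theory Num.Theory.
Local Open Scope ring_scope.

Section Aux.
Variables (R : realType) (I : finType).
Implicit Types (S : int -> Prop) (p q : O R I).

Lemma poly_inW S S' p : (forall i, S i -> S' i) -> poly_in S p -> poly_in S' p.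
Proof. by move=> HS H m Hm v Hv; apply/HS/(H m Hm v Hv). Qed.

Lemma poly_in0 S : poly_in S (0 : O R I).
Proof. by move=> m; rewrite msupp0 in_fset0. Qed.

Lemma poly_inD S p q : poly_in S p -> poly_in S q -> poly_in S (p + q).
Proof.
move=> Hp Hq m /(fsubsetP (msuppD_le _ _)); rewrite in_fsetU => /orP[] Hm.
  exact: Hp. exact: Hq.
Qed.

Lemma poly_inN S p : poly_in S p -> poly_in S (- p).
Proof. by move=> Hp m; rewrite msuppN; apply: Hp. Qed.

Lemma poly_inB S p q : poly_in S p -> poly_in S q -> poly_in S (p - q).
Proof. by move=> Hp Hq; apply: poly_inD => //; apply: poly_inN. Qed.

Lemma poly_in_sum S (T : Type) (r : seq T) (P : pred T) (F : T -> O R I) :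
  (forall i, P i -> poly_in S (F i)) -> poly_in S (\sum_(i <- r | P i) F i).
Proof.
move=> H; elim/big_ind: _ => //; [exact: poly_in0 | exact: poly_inD].
Qed.

Lemma poly_in_sum_seq S (T : eqType) (r : seq T) (P : pred T) (F : T -> O R I) :
  (forall i, i \in r -> P i -> poly_in S (F i)) -> poly_in S (\sum_(i <- r | P i) F i).
Proof.
move=> H; rewrite big_seq_cond; apply: poly_in_sum => i /andP[]; exact: H.
Qed.

Lemma poly_inZ S c p : poly_in S p -> poly_in S (c *: p).
Proof. by move=> Hp m /(fsubsetP (msuppZ_le _ _)); apply: Hp. Qed.

Lemma poly_inM S p q : poly_in S p -> poly_in S q -> poly_in S (p * q).
Proof.
move=> Hp Hq m /msuppM_le [k1 [k2 [H1 H2 ->]]] v.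
rewrite mdomD in_fsetU => /orP[] Hv. exact: (Hp _ H1). exact: (Hq _ H2).
Qed.

Lemma poly_inU S (c : CC R) (m : cmonom (Var I)) :
  (forall v, v \in finsupp m -> S v.2) -> poly_in S << c *g m >>.
Proof.
by move=> H m' /(fsubsetP msuppU_le); rewrite in_fset1 => /eqP ->.
Qed.

Lemma poly_in_deriv S (v : Var I) p : poly_in S p -> poly_in S (Defs.deriv v p).
Proof.
move=> Hp; apply: poly_in_sum => m _.
case: (boolP (m \in msupp p)) => Hm; last first.
  by rewrite mcoeff_outdom // mul0r monalgU0; apply: poly_in0.
apply: poly_inU => w; rewrite -cmE_neq0 divcmE => Hw.
apply: (Hp m Hm); rewrite -cmE_neq0; apply: contra Hw => /eqP ->.
by rewrite sub0n.
Qed.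

Lemma vars_in S p v : poly_in S p -> v \in vars p -> S v.2.
Proof.
move=> Hp; rewrite /vars mem_undup => /flattenP [s /mapP [m Hm ->] Hv].
exact: (Hp m Hm).
Qed.

Definition lin p := forall m, m \in msupp p -> exists u, m = ucm u.

Lemma lin0 : lin 0.
Proof. by move=> m; rewrite msupp0 in_fset0. Qed.

Lemma linD p q : lin p -> lin q -> lin (p + q).
Proof.
move=> Hp Hq m /(fsubsetP (msuppD_le _ _)); rewrite in_fsetU => /orP[] Hm.
  exact: Hp. exact: Hq.
Qed.

Lemma lin_sum (T : Type) (r : seq T) (P : pred T) (F : T -> O R I) :
  (forall i, P i -> lin (F i)) -> lin (\sum_(i <- r | P i) F i).
Proof.
move=> H; elim/big_ind: _ => //; [exact: lin0 | exact: linD].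
Qed.

Lemma linZ c p : lin p -> lin (c *: p).
Proof. by move=> Hp m /(fsubsetP (msuppZ_le _ _)); apply: Hp. Qed.

Lemma linX (u : Var I) : lin (Xv R u).
Proof.
by move=> m /(fsubsetP msuppU_le); rewrite in_fset1 => /eqP ->; exists u.
Qed.

Lemma lin_deriv S (v : Var I) p : lin p -> poly_in S (Defs.deriv v p).
Proof.
move=> Hp; apply: poly_in_sum => m _.
case: (boolP (m \in msupp p)) => Hm; last first.
  by rewrite mcoeff_outdom // mul0r monalgU0; apply: poly_in0.
have [u ->] := Hp m Hm.
case: (eqVneq u v) => [->|nuv].
  apply: poly_inU => w; rewrite -cmE_neq0 divcmE subnn.
  by rewrite eqxx.
by rewrite ucmE (negPf nuv) mulr0 monalgU0; apply: poly_in0.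
Qed.

Lemma poly_inX S (u : Var I) : S u.2 -> poly_in S (Xv R u).
Proof.
move=> Hu; apply: poly_inU => w; rewrite mdomU in_fset1 => /eqP -> //.
Qed.


Lemma sum_norm_ge (s : seq (I * I * int)) k : k \in s ->
  `|k.2| <= \sum_(k' <- s) `|k'.2|.
Proof.
elim: s => // h s IH; rewrite in_cons big_cons => /orP[/eqP ->|Hk].
  idtac.
  by rewrite -[X in X <= _]addr0 lerD2l sumr_ge0.
by apply: le_trans (IH Hk) _; rewrite -[X in X <= _]add0r lerD2r.
Qed.

Section Main.
Variable x : loopD R I.
Let M : int := \sum_(k <- (msupp x.1 : seq _)) `|k.2|.

Lemma M_ge0 : 0 <= M.
Proof. exact: sumr_ge0. Qed.

Lemma P_lin w : lin (iota_emb x w).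
Proof.
apply: linD; last by apply: linZ; apply: linX.
by apply: lin_sum => k _; apply: linZ; apply: linX.
Qed.

Lemma P_bound w : poly_in (fun i => `|i| <= `|w.2| + M) (iota_emb x w).
Proof.
apply: poly_inD; last first.
  by apply: poly_inZ; apply: poly_inX => /=; rewrite -[X in X <= _]addr0 lerD2l M_ge0.
apply: poly_in_sum_seq => k Hk _.
apply: poly_inZ; apply: poly_inX => /=.
apply: le_trans (ler_normB _ _) _; rewrite lerD2l.
exact: sum_norm_ge.
Qed.

Lemma P_vars w : poly_in (fun i => i = w.2 \/ exists2 k, k \in msupp x.1 & i = w.2 - k.2)
  (iota_emb x w).
Proof.
apply: poly_inD; last by apply: poly_inZ; apply: poly_inX; left.
apply: poly_in_sum_seq => k Hk _.
by apply: poly_inZ; apply: poly_inX; right; exists k.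
Qed.

End Main.
End Aux.
Arguments vars_in {R I S p v}.
Arguments poly_inW {R I S S' p}.
Arguments poly_in_deriv {R I S} v {p}.
Arguments poly_inM {R I S p q}.
Arguments poly_in_sum_seq {R I S T r P F}.
Arguments poly_inB {R I S p q}.
Arguments lin_deriv {R I S v p}.
Arguments P_bound {R I}.
Arguments P_vars {R I}.
Arguments P_lin {R I}.

Theorem lemma3p6 (R : realType) (I : finType) (x : loopD R I) (v : Derbar R I) :
  widening_gap v -> widening_gap (bracket (iota_emb x) v).
Proof.
move=> Hv K K1.
pose M : int := \sum_(k <- (msupp x.1 : seq _)) `|k.2|.
have M0 : 0 <= M by exact: sumr_ge0.
have [s Hs] := Hv (K + `|M|%N)%N (leq_trans K1 (leq_addr _ _)).
have KM : ((K + `|M|%N)%N%:Z) = K%:Z + M by rewrite PoszD abszE ger0_norm.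
exists (s ++ [seq j + k.2 | j <- s, k <- (msupp x.1 : seq _)]).
move=> n Hn a.
have Hns : n \notin s by apply: contra Hn; rewrite mem_cat => ->.
have Hnk : forall k, k \in msupp x.1 -> n - k.2 \notin s.
  move=> k Hk; apply: contra Hn => H; rewrite mem_cat; apply/orP; right.
  by have := allpairs_f (fun j (k : I * I * int) => j + k.2) H Hk; rewrite subrK.
rewrite /bracket; apply: poly_inB.
- apply: poly_in_sum_seq => v' Hv' _.
  have Hb := vars_in (Hs n Hns a) Hv'; rewrite /= KM in Hb.
  apply: poly_inM.
  + apply: poly_inW (P_bound x v') => i /= Hi.
    rewrite -/M in Hi; lia.
  + apply: poly_inW (poly_in_deriv v' (Hs n Hns a)) => i /=; rewrite KM => Hi.
    lia.
- apply: poly_in_sum_seq => -[b j] Hv' _.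
  have Hb := vars_in (P_bound x (a, n)) Hv'; rewrite /= in Hb.
  have Hjs : j \notin s.
    have [/= ->|[k Hk /= ->]] := vars_in (P_vars x (a, n)) Hv' => //.
    exact: Hnk.
  apply: poly_inM.
  + apply: poly_inW (Hs j Hjs b) => i /=; rewrite KM => Hi.
    rewrite -/M in Hb; lia.
  + exact: lin_deriv (P_lin x (a, n)).
Qed.
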